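(* Let $r\ge2$ and $m\ge1$ be integers. Then (i) $P\left(-\frac{r-1}{r},-\frac{r-2}{r},\ldots,-\frac{r-m}{r}\right)\,S_m\!\left(r-\frac{t\varphi'(t)}{\varphi(t)}\right)\,Q\left(\frac{r-1}{r},\frac{r-2}{r},\ldots,\frac{r-m}{r}\right)=r\,\mathrm{I}_m$; (ii) $P\left(-\frac{r-1}{r},\ldots,-\frac{r-m}{r}\right)\,\mathrm{diag}(r-1,r-2,\ldots,r-m)\,Q\left(\frac{r-1}{r},\ldots,\frac{r-m}{r}\right)=\mathrm{diag}(r-1,r-2,\ldots,r-m)$.
   Context: $s_1,\dots,s_r$ are independent indeterminates over $\mathbb{Q}$ and $\varphi(t)=1+s_1t+\cdots+s_rt^r$. For $\lambda\in\mathbb{C}$ and $\ell\in\mathbb{Z}$, $\beta_\ell(\lambda)$ is the coefficient of $t^\ell$ in the power series $\varphi(t)^\lambda$ (so $\beta_0(\lambda)=1$, $\beta_\ell(\lambda)=0$ for $\ell<0$). For $\lambda_1,\dots,\lambda_m\in\mathbb{C}$, $P(\lambda_1,\ldots,\lambda_m)$ is the $m\times m$ matrix with $(i,j)$ entry $\beta_{i-j}(\lambda_i)$; for $\mu_1,\dots,\mu_m$, $Q(\mu_1,\ldots,\mu_m)$ is the $m\times m$ matrix with $(i,j)$ entry $\beta_{i-j}(\mu_j)$. For a power series $\psi(t)=a_0+a_1t+\cdots$, $S_m(\psi(t))$ is the $m\times m$ matrix with $(i,j)$ entry $a_{i-j}$ (with $a_i=0$ for $i<0$). $\mathrm{I}_m$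 is the identity matrix. *)

(* Defs.v *)
From mathcomp Require Import all_boot all_algebra.
From mathcomp Require Import mpoly.
Set Implicit Arguments. Unset Strict Implicit. Unset Printing Implicit Defensive.
Import GRing.Theory.
Local Open Scope ring_scope.

(* Ring of coefficients: Q[s_1,...,s_r] = {mpoly rat[r]}, with s_(i+1) = 'X_i. *)

Definition gbinom (l : rat) (k : nat) : rat :=
  (\prod_(i < k) (l - i%:R)) / (k`!)%:R.

Definition phi (r : nat) : {poly {mpoly rat[r]}} :=
  1 + \sum_(i < r) ('X_i)%:P * 'X^(i.+1).

(* beta_l(lambda) = [t^l] phi(t)^lambda, where for a series with constant term 1,
   phi^lambda = sum_k binom(lambda,k) (phi - 1)^k (only k <= l contribute to t^l);
   beta_l = 0 for l < 0. *)
Definition beta (r : nat) (lam : rat) (l : int) : {mpoly rat[r]} :=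
  match l with
  | Posz n => (\sum_(k < n.+1) (gbinom lam k)%:MP *: (phi r - 1) ^+ k)`_n
  | Negz _ => 0
  end.

(* coefficients of the power series  r - t phi'(t)/phi(t),
   using 1/phi = phi^(-1) with coefficients beta_k(-1) *)
Definition psi_coef (r : nat) (n : nat) : {mpoly rat[r]} :=
  (r%:R *+ (n == 0)%N)
  - \sum_(j < n.+1) ('X * (phi r)^`())`_j * beta r (-1) (n - j)%N.

Definition Smat (r m : nat) (a : nat -> {mpoly rat[r]}) : 'M[{mpoly rat[r]}]_m :=
  \matrix_(i < m, j < m) (if (j <= i)%N then a (i - j)%N else 0).

Definition Pmat (r m : nat) (lam : 'I_m -> rat) : 'M[{mpoly rat[r]}]_m :=
  \matrix_(i < m, j < m) beta r (lam i) (i%:Z - j%:Z).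

Definition Qmat (r m : nat) (mu : 'I_m -> rat) : 'M[{mpoly rat[r]}]_m :=
  \matrix_(i < m, j < m) beta r (mu j) (i%:Z - j%:Z).

(* Main.v *)
Require Import Defs.
From mathcomp Require Import all_boot all_algebra.
From mathcomp Require Import mpoly ring zify.
Import GRing.Theory Num.Theory.
Local Open Scope ring_scope.

Lemma cast_lem (r i : nat) : ((r%:Z - (i.+1)%:Z)%:~R : rat) = r%:R - i%:R - 1.
Proof. rewrite intrB -!pmulrn -natr1; ring. Qed.

Definition uu r : {poly {mpoly rat[r]}} := phi r - 1.
Definition Pc r (N : nat) (c : rat) : {poly {mpoly rat[r]}} :=
  \poly_(k < N) (gbinom c k)%:MP.
Definition Bs_def r N c := Pc r N c \Po uu r.
Fact Bs_key : unit. Proof. exact: tt. Qed.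
Definition Bs := locked_with Bs_key Bs_def.
Lemma BsE r N c : Bs r N c = Pc r N c \Po uu r.
Proof. by rewrite /Bs unlock. Qed.
Definition agree r n (p q : {poly {mpoly rat[r]}}) :=
  forall j, (j <= n)%N -> p`_j = q`_j.
Definition conv r (x y : nat -> {mpoly rat[r]}) n :=
  \sum_(j < n.+1) x j * y (n - j)%N.
Definition PS r N (x : nat -> {mpoly rat[r]}) : {poly {mpoly rat[r]}} :=
  \poly_(j < N) x j.

Lemma uu_eq r : uu r = 'X * \sum_(i < r) ('X_i)%:P * 'X^i.
Proof.
rewrite /uu /phi addrAC subrr add0r mulr_sumr; apply: eq_bigr => i _.
by rewrite exprS mulrCA.
Qed.

Lemma coef_uX r k n : (n < k)%N -> ((uu r)^+k)`_n = 0.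
Proof. by move=> h; rewrite uu_eq exprMn coefXnM h. Qed.

Lemma coef_comp_u r (p : {poly {mpoly rat[r]}}) n :
  (p \Po uu r)`_n = \sum_(k < n.+1) p`_k * ((uu r)^+k)`_n.
Proof.
rewrite comp_polyE coef_sum.
set M := maxn (size p) n.+1.
rewrite (big_ord_widen M (fun k => (p`_k *: uu r ^+ k)`_n)) ?leq_maxl //.
rewrite (big_ord_widen M (fun k => p`_k * (uu r ^+ k)`_n)) ?leq_maxr //.
rewrite big_mkcond [RHS]big_mkcond; apply: eq_bigr => k _; rewrite coefZ.
case: (ltnP k (size p)) => h1; case: (ltnP k n.+1) => h2.
- by [].
- by rewrite coef_uX // mulr0.
- by rewrite (nth_default _ h1) mul0r.
- by [].
Qed.

Lemma beta_Bs r N c n : (n < N)%N -> beta r c n = (Bs r N c)`_n.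
Proof.
move=> hn; rewrite BsE coef_comp_u /beta coef_sum; apply: eq_bigr => k _.
by rewrite coefZ coef_poly (leq_trans (ltn_ord k) hn) /uu.
Qed.

Lemma agree_refl r n p : agree r n p p. Proof. by []. Qed.
Lemma agree_sym r n p q : agree r n p q -> agree r n q p.
Proof. by move=> h j hj; rewrite h. Qed.
Lemma agree_trans r n p q s : agree r n p q -> agree r n q s -> agree r n p s.
Proof. by move=> h1 h2 j hj; rewrite h1 ?h2. Qed.
Lemma agree_B r n p p' q q' : agree r n p p' -> agree r n q q' ->
  agree r n (p - q) (p' - q').
Proof. by move=> h1 h2 j hj; rewrite !coefB h1 ?h2. Qed.

Lemma agree_mul r n p p' q q' : agree r n p p' -> agree r n q q' ->
  agree r n (p * q) (p' * q').
Proof.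
move=> hp hq j hj; rewrite !coefM; apply: eq_bigr => i _.
have hi : (i <= j)%N by rewrite -ltnS.
rewrite hp ?hq //; first exact: leq_trans (leq_subr _ _) hj.
exact: leq_trans hi hj.
Qed.

Lemma agree_comp r n (p p' : {poly {mpoly rat[r]}}) : agree r n p p' -> agree r n (p \Po uu r) (p' \Po uu r).
Proof.
move=> h j hj.
apply: etrans (coef_comp_u r p j) _.
apply: etrans _ (esym (coef_comp_u r p' j)).
apply: eq_bigr => k _.
have hk : (k <= j)%N by rewrite -ltnS.
by rewrite h // (leq_trans hk hj).
Qed.

Arguments agree_refl {r n} p.
Arguments agree_sym {r n p q}.
Arguments agree_trans {r n p q s}.
Arguments agree_B {r n p p' q q'}.
Arguments agree_mul {r n p p' q q'}.
Arguments agree_comp {r n p p'}.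

Lemma gbinom0 c : gbinom c 0 = 1.
Proof. by rewrite /gbinom big_ord0 fact0 divr1. Qed.

Lemma natr_neq0 k : (k.+1%:R : rat) != 0.
Proof. by rewrite pnatr_eq0. Qed.

Lemma fact_neq0 k : ((k`!)%:R : rat) != 0.
Proof. by rewrite pnatr_eq0 -lt0n fact_gt0. Qed.

Lemma gbinomS c k : gbinom c k.+1 * k.+1%:R = gbinom c k * (c - k%:R).
Proof.
rewrite /gbinom big_ord_recr factS natrM /=.
have h1 := natr_neq0 k; have h2 := fact_neq0 k.
by field; rewrite h2 /= addrC natr1.
Qed.

Lemma gbinomS' c k : gbinom c k.+1 * k.+1%:R = c * gbinom (c - 1) k.
Proof.
rewrite /gbinom big_ord_recl factS natrM /=.
have -> : \prod_(i < k) (c - (bump 0 i)%:R) = \prod_(i < k) (c - 1 - i%:R).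
  by apply: eq_bigr => i _; rewrite /bump /= add1n -natr1; ring.
have h1 := natr_neq0 k; have h2 := fact_neq0 k.
by field; rewrite h2 /= addrC natr1.
Qed.

Lemma vdm a b k :
  \sum_(i < k.+1) gbinom a i * gbinom b (k - i) = gbinom (a + b) k.
Proof.
elim: k => [|k IH].
  by rewrite big_ord1 !gbinom0 mulr1.
apply: (mulIf (natr_neq0 k)); rewrite gbinomS -IH !mulr_suml.
have step1 : \sum_(i < k.+2) gbinom a i * gbinom b (k.+1 - i) * k.+1%:R =
  \sum_(i < k.+2) (gbinom a i * i%:R) * gbinom b (k.+1 - i) +
  \sum_(i < k.+2) gbinom a i * (gbinom b (k.+1 - i) * (k.+1 - i)%:R).
  rewrite -big_split; apply: eq_bigr => i _ /=.
  have hi : (i <= k.+1)%N by rewrite -ltnS.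
  rewrite natrB //; ring.
rewrite step1 [X in X + _]big_ord_recl [X in _ + X]big_ord_recr /= mulr0 mul0r add0r subnn mulr0 mulr0 addr0.
rewrite -big_split; apply: eq_bigr => i _ /=.
have hi : (i <= k)%N by rewrite -ltnS.
rewrite /bump /= add1n subSS gbinomS (subSn hi) gbinomS natrB //; ring.
Qed.

Lemma agree_eq r n (p q : {poly {mpoly rat[r]}}) : p = q -> agree r n p q.
Proof. by move=> ->. Qed.
Arguments agree_eq {r n p q}.

Lemma MPnat r k : ((k%:R : rat)%:MP : {mpoly rat[r]}) = k%:R.
Proof. exact: (rmorph_nat (@mpolyC r rat)). Qed.

Lemma PcM r N a b n : (n < N)%N ->
  agree r n (Pc r N a * Pc r N b) (Pc r N (a + b)).
Proof.
move=> hn j hj.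
have hjN : (j < N)%N by exact: leq_ltn_trans hj hn.
rewrite coefM [RHS]coef_poly hjN -vdm rmorph_sum; apply: eq_bigr => i _ /=.
have hi : (i <= j)%N by rewrite -ltnS.
rewrite !coef_poly (leq_ltn_trans hi hjN) (leq_ltn_trans (leq_subr i j) hjN).
by rewrite -rmorphM.
Qed.

Lemma BsM r N a b n : (n < N)%N ->
  agree r n (Bs r N a * Bs r N b) (Bs r N (a + b)).
Proof.
move=> hn; rewrite !BsE -comp_polyM; apply: agree_comp; exact: PcM.
Qed.

Lemma Pc_deriv r N c n : (n.+1 < N)%N ->
  agree r n ((Pc r N c)^`()) ((c%:MP)%:P * Pc r N (c - 1)).
Proof.
move=> hn j hj.
have hj1 : (j.+1 < N)%N by apply: leq_ltn_trans hn; rewrite ltnS.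
rewrite coef_deriv coefCM !coef_poly hj1 (ltnW hj1).
by rewrite -mulr_natr -MPnat -!rmorphM gbinomS'.
Qed.

Lemma coefXD r (p : {poly {mpoly rat[r]}}) n : ('X * p^`())`_n = p`_n *+ n.
Proof. by rewrite coefXM; case: n => [|n] /=; [rewrite mulr0n | rewrite coef_deriv]. Qed.

Lemma uu_deriv r : (uu r)^`() = (phi r)^`().
Proof. by rewrite /uu derivB -polyC1 derivC subr0. Qed.

Lemma Bs_deriv r N c n : (n.+1 < N)%N ->
  agree r n ('X * (Bs r N c)^`())
    ((c%:MP)%:P * ('X * (phi r)^`() * Bs r N (c - 1))).
Proof.
move=> hn; rewrite !BsE deriv_comp uu_deriv.
apply: agree_trans (agree_mul (agree_refl 'X)
   (agree_mul (agree_comp (Pc_deriv _ _ _ _ hn)) (agree_refl _))) _.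
apply: agree_eq; rewrite comp_polyM comp_polyC; ring.
Qed.

Lemma Bs0 r N c : (0 < N)%N -> (Bs r N c)`_0 = 1.
Proof.
move=> hN; apply: etrans (esym (beta_Bs r N c 0 hN)) _.
by rewrite /beta /= big_ord1 gbinom0 expr0 rmorph1 scale1r coef1.
Qed.

Lemma W_lem r N n : (0 < r)%N -> (0 < n)%N -> (n.+1 < N)%N ->
  ('X * (phi r)^`() * Bs r N (n%:R / r%:R - 1))`_n
   = r%:R * (Bs r N (n%:R / r%:R))`_n.
Proof.
move=> hr hn hN; set c := (n%:R / r%:R : rat).
have h := Bs_deriv r N c n hN n (leqnn n); rewrite coefXD coefCM in h.
have hn0 : (n%:R : {mpoly rat[r]}) != 0.
  by rewrite -MPnat mpolyC_eq0 pnatr_eq0 -lt0n.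
apply: (mulfI hn0).
have e : (n%:R : {mpoly rat[r]}) = r%:R * c%:MP.
  rewrite -!MPnat -rmorphM /c; congr (_%:MP).
  have hr0 : (r%:R : rat) != 0 by rewrite pnatr_eq0 -lt0n.
  by field.
rewrite {1}e -[r%:R * c%:MP_[r] * _]mulrA -h -mulr_natr; ring.
Qed.

Lemma conv_PS r N x y n : (n < N)%N -> conv r x y n = (PS r N x * PS r N y)`_n.
Proof.
move=> hn; rewrite /conv coefM; apply: eq_bigr => j _.
have hj : (j <= n)%N by rewrite -ltnS.
by rewrite !coef_poly (leq_ltn_trans hj hn) (leq_ltn_trans (leq_subr j n) hn).
Qed.

Lemma agree_PS r N x (p : {poly {mpoly rat[r]}}) n : (n < N)%N -> (forall j, (j <= n)%N -> x j = p`_j) ->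
  agree r n (PS r N x) p.
Proof. by move=> hn h j hj; rewrite coef_poly (leq_ltn_trans hj hn); exact: h. Qed.

Lemma conv3 r N x y z n : (n < N)%N ->
  conv r (conv r x y) z n = ((PS r N x * PS r N y) * PS r N z)`_n.
Proof.
move=> hn; rewrite (conv_PS _ _ _ _ _ hn).
have H : agree r n (PS r N (conv r x y)) (PS r N x * PS r N y).
  by apply: agree_PS => // j hj; exact: conv_PS (leq_ltn_trans hj hn).
exact: (agree_mul H (agree_refl _) n (leqnn n)).
Qed.

Lemma PS_beta r N c n : (n < N)%N ->
  agree r n (PS r N (fun j : nat => beta r c j)) (Bs r N c).
Proof. move=> hn; apply: agree_PS => // j hj; exact: beta_Bs (leq_ltn_trans hj hn). Qed.

Lemma PS_psi r N n : (n < N)%N ->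
  agree r n (PS r N (psi_coef r))
    ((r%:R)%:P - 'X * (phi r)^`() * Bs r N (-1)).
Proof.
move=> hn; apply: agree_PS => // j hj.
rewrite /psi_coef coefB coefC coefM.
have -> : (r%:R : {mpoly rat[r]}) *+ (j == 0%N) = if j == 0%N then r%:R else 0.
  by case: (j == 0%N).
congr (_ - _); apply: eq_bigr => i _.
have hi : (j - i < N)%N by exact: leq_ltn_trans (leq_subr i j) (leq_ltn_trans hj hn).
by rewrite (beta_Bs r N (-1) _ hi).
Qed.

Lemma PS_y r N n b (rb : rat) : (n < N)%N ->
  agree r n (PS r N (fun j => rb%:MP * beta r b j - beta r b j *+ j))
    ((rb%:MP)%:P * Bs r N b - 'X * (Bs r N b)^`()).
Proof.
move=> hn; apply: agree_PS => // j hj.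
have hjN : (j < N)%N by exact: leq_ltn_trans hj hn.
by rewrite coefB coefCM coefXD -(beta_Bs r N b j hjN).
Qed.

Lemma final_i r N n a b : (0 < r)%N -> (n.+1 < N)%N -> a + b = n%:R / r%:R ->
  ((Bs r N a * ((r%:R)%:P - 'X * (phi r)^`() * Bs r N (-1))) * Bs r N b)`_n
   = r%:R *+ (n == 0%N).
Proof.
move=> hr hN hab.
have hn : (n < N)%N := ltnW hN.
have A : agree r n
   ((Bs r N a * ((r%:R)%:P - 'X * (phi r)^`() * Bs r N (-1))) * Bs r N b)
   ((r%:R)%:P * Bs r N (a + b) - 'X * (phi r)^`() * Bs r N (a + -1 + b)).
  apply: (agree_trans (q := (r%:R)%:P * (Bs r N a * Bs r N b)
        - 'X * (phi r)^`() * ((Bs r N a * Bs r N (-1)) * Bs r N b))).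
    by apply: agree_eq; ring.
  apply: agree_B; apply: agree_mul (agree_refl _) _; first exact: BsM.
  apply: agree_trans (agree_mul (BsM _ _ _ _ _ hn) (agree_refl _)) _.
  exact: BsM.
apply: etrans (A n (leqnn n)) _.
rewrite coefB coefCM.
have e1 : a + -1 + b = n%:R / r%:R - 1 by rewrite -hab; ring.
rewrite e1 hab.
clear A hn; move: hN hab e1; case: n => [|n] hN hab e1.
  by rewrite Bs0 ?(ltnW hN) // -mulrA coefXM /= subr0 mulr1.
by rewrite W_lem // subrr.
Qed.

Lemma final_ii r N n a b (rb : rat) : (0 < r)%N -> (n.+1 < N)%N ->
  a + b = n%:R / r%:R -> rb = r%:R * b ->
  (Bs r N a * ((rb%:MP)%:P * Bs r N b - 'X * (Bs r N b)^`()))`_n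
   = rb%:MP *+ (n == 0%N).
Proof.
move=> hr hN hab hrb.
have hn : (n < N)%N := ltnW hN.
have A : agree r n
   (Bs r N a * ((rb%:MP)%:P * Bs r N b - 'X * (Bs r N b)^`()))
   ((rb%:MP)%:P * Bs r N (a + b)
      - (b%:MP)%:P * ('X * (phi r)^`() * Bs r N (a + (b - 1)))).
  apply: (agree_trans (q := (rb%:MP)%:P * (Bs r N a * Bs r N b)
        - Bs r N a * ('X * (Bs r N b)^`()))).
    by apply: agree_eq; ring.
  apply: agree_B; first by apply: agree_mul (agree_refl _) _; exact: BsM.
  apply: agree_trans (agree_mul (agree_refl _) (Bs_deriv _ _ _ _ hN)) _.
  apply: (agree_trans (q := (b%:MP)%:P * ('X * (phi r)^`() *
                                (Bs r N a * Bs r N (b - 1))))).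
    by apply: agree_eq; ring.
  apply: agree_mul (agree_refl _) _; apply: agree_mul (agree_refl _) _.
  exact: BsM.
apply: etrans (A n (leqnn n)) _.
rewrite coefB !coefCM.
have e1 : a + (b - 1) = n%:R / r%:R - 1 by rewrite -hab; ring.
rewrite e1 hab.
clear A hn; move: hN hab e1; case: n => [|n] hN hab e1.
  by rewrite Bs0 ?(ltnW hN) // -mulrA coefXM /= mulr0 subr0 mulr1.
rewrite W_lem // hrb rmorphM /= MPnat /=; ring.
Qed.

Lemma SmatM r m x y : @Smat r m x *m @Smat r m y = @Smat r m (conv r x y).
Proof.
apply/matrixP => i k; rewrite !mxE.
pose F := fun j : nat => (if (j <= i)%N then x (i - j)%N else 0) *
                          (if (k <= j)%N then y (j - k)%N else 0).
have -> : \sum_(j < m) @Smat r m x i j * @Smat r m y j k = \sum_(0 <= j < m) F j.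
  by rewrite big_mkord; apply: eq_bigr => j _; rewrite !mxE.
case: (leqP k i) => hki; last first.
  rewrite big1 // => j _; rewrite /F.
  case: (leqP j i) => h1; last by rewrite mul0r.
  by case: (leqP k j) => h2; [lia | rewrite mulr0].
have hkm : (k <= m)%N by apply: ltnW.
have him : (i.+1 <= m)%N by [].
rewrite (big_cat_nat _ (n:=k)) //= (big_cat_nat _ (m:=k) (n:=i.+1)) //=; last lia.
rewrite [X in X + _]big1_seq ?add0r; last first.
  move=> j /andP[_]; rewrite mem_index_iota => /andP[_ hj]; rewrite /F.
  by case: (leqP k j) => h2; [lia | rewrite mulr0].
rewrite [X in _ + X]big1_seq ?addr0; last first.
  move=> j /andP[_]; rewrite mem_index_iota => /andP[hj _]; rewrite /F.
  by case: (leqP j i) => h2; [lia | rewrite mul0r].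
have := big_addn 0 i.+1 k xpredT F; rewrite add0n => ->.
rewrite /conv -(big_mkord xpredT (fun j => x j * y (i - k - j)%N)) big_nat_rev /=.
have -> : (i.+1 - k = (i - k).+1)%N by lia.
apply: eq_big_nat => j /andP[_ hj]; rewrite /F.
have -> : (0 + (i - k).+1 - j.+1 + k <= i)%N by lia.
have -> : (k <= 0 + (i - k).+1 - j.+1 + k)%N by lia.
have -> : (i - (0 + (i - k).+1 - j.+1 + k) = j)%N by lia.
by have -> : (0 + (i - k).+1 - j.+1 + k - k = i - k - j)%N by lia.
Qed.

Lemma mulmx_entry r m (A A' C C' : 'M[{mpoly rat[r]}]_m) i k :
  row i A = row i A' -> col k C = col k C' -> (A *m C) i k = (A' *m C') i k.
Proof.
move=> hA hC; rewrite !mxE; apply: eq_bigr => j _.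
have e1 := congr1 (fun M : 'M[{mpoly rat[r]}]_(1, m) => M 0 j) hA.
have e2 := congr1 (fun M : 'M[{mpoly rat[r]}]_(m, 1) => M j 0) hC.
move: e1 e2; rewrite /= !mxE => -> ->; by [].
Qed.

Lemma negz_eq (i j : nat) : (i < j)%N -> (i%:Z - j%:Z) = Negz (j - i.+1)%N.
Proof.
move=> h; rewrite NegzE; set n := (j - i.+1)%N.
have -> : j = (n.+1 + i)%N by rewrite /n; lia.
rewrite PoszD; ring.
Qed.

Lemma beta_neg r c (i j : nat) : (i < j)%N -> beta r c (i%:Z - j%:Z) = 0.
Proof. by move=> h; rewrite negz_eq. Qed.

Lemma row_P r m (lam : 'I_m -> rat) i :
  row i (Pmat r lam) = row i (@Smat r m (fun n : nat => beta r (lam i) n)).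
Proof.
apply/rowP => j; rewrite !mxE.
by case: (leqP j i) => h; [rewrite subzn | rewrite beta_neg].
Qed.

Lemma col_Q r m (mu : 'I_m -> rat) k :
  col k (Qmat r mu) = col k (@Smat r m (fun n : nat => beta r (mu k) n)).
Proof.
apply/colP => j; rewrite !mxE.
by case: (leqP k j) => h; [rewrite subzn | rewrite beta_neg].
Qed.

Lemma col_DQ r m (lam : 'I_m -> rat) k :
  col k (diag_mx (\row_(i < m) (((r%:Z - (i.+1)%:Z)%:~R : rat)%:MP
                                  : {mpoly rat[r]})) *m Qmat r lam)
  = col k (@Smat r m (fun n : nat => ((r%:R - k%:R - 1 : rat)%:MP)
                         * beta r (lam k) n - beta r (lam k) n *+ n)).
Proof.
apply/colP => j; rewrite mul_diag_mx !mxE cast_lem.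
case: (leqP k j) => h; last by rewrite beta_neg // mulr0.
rewrite subzn // -[beta r (lam k) _ *+ _]mulr_natl -MPnat -mulrBl -rmorphB natrB //.
congr (_%:MP * _); ring.
Qed.

Lemma eq_ik m (i k : 'I_m) : (k <= i)%N -> ((i - k)%N == 0%N) = (i == k).
Proof.
move=> h; rewrite subn_eq0; apply/idP/idP => [h2|/eqP ->//].
by apply/eqP/val_inj/eqP; rewrite eqn_leq h2 h.
Qed.

Theorem lemma12 (r m : nat) (hr : (2 <= r)%N) (hm : (1 <= m)%N) :
  let lam := fun i : 'I_m => ((r%:Z - (i.+1)%:Z)%:~R / r%:R : rat) in
  let D := diag_mx (\row_(i < m) (((r%:Z - (i.+1)%:Z)%:~R : rat)%:MP : {mpoly rat[r]})) in
  (Pmat r (fun i => - lam i) *m @Smat r m (psi_coef r) *m Qmat r lam = (r%:R : {mpoly rat[r]})%:M)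
  /\ (Pmat r (fun i => - lam i) *m D *m Qmat r lam = D).
Proof.
move=> lam D.
have hr0 : (0 < r)%N by lia.
pose N := m.+1.
have hr' : (r%:R : rat) != 0 by rewrite pnatr_eq0 -lt0n.
have lamE : forall i : 'I_m, lam i = (r%:R - i%:R - 1) / r%:R.
  by move=> i; rewrite /lam cast_lem.
have cE : forall i k : 'I_m, (k <= i)%N -> - lam i + lam k = (i - k)%N%:R / r%:R.
  by move=> i k h; rewrite !lamE natrB //; field.
split.
- apply/matrixP => i k.
  have E : (Pmat r (fun i => - lam i) *m @Smat r m (psi_coef r) *m Qmat r lam) i k
        = (@Smat r m (fun n : nat => beta r (- lam i) n) *m @Smat r m (psi_coef r)
             *m @Smat r m (fun n : nat => beta r (lam k) n)) i k.
    apply: mulmx_entry; first by rewrite !row_mul row_P.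
    exact: col_Q.
  rewrite E !SmatM mxE [RHS]mxE.
  case: (leqP k i) => hki; last first.
    rewrite (_ : (i == k) = false) ?mulr0n //.
    by apply/eqP => e; move: hki; rewrite e ltnn.
  have hi := ltn_ord i.
  have hn : ((i - k)%N.+1 < N)%N by rewrite /N; lia.
  rewrite (conv3 r N _ _ _ _ (ltnW hn)).
  apply: etrans (agree_mul (agree_mul (PS_beta r N (- lam i) _ (ltnW hn))
                  (PS_psi r N _ (ltnW hn))) (PS_beta r N (lam k) _ (ltnW hn))
                  _ (leqnn _)) _.
  apply: etrans (final_i r N _ _ _ hr0 hn (cE i k hki)) _.
  by rewrite eq_ik.
- apply/matrixP => i k.
  rewrite -mulmxA.
  have E : (Pmat r (fun i => - lam i) *m (D *m Qmat r lam)) i k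
        = (@Smat r m (fun n : nat => beta r (- lam i) n) *m
           @Smat r m (fun n : nat => ((r%:R - k%:R - 1 : rat)%:MP)
                         * beta r (lam k) n - beta r (lam k) n *+ n)) i k.
    apply: mulmx_entry; first exact: row_P.
    exact: col_DQ.
  have RD : D i k = ((r%:R - i%:R - 1 : rat)%:MP) *+ (i == k).
    by rewrite /D !mxE cast_lem.
  rewrite E SmatM mxE RD.
  case: (leqP k i) => hki; last first.
    rewrite (_ : (i == k) = false) ?mulr0n //.
    by apply/eqP => e; move: hki; rewrite e ltnn.
  have hi := ltn_ord i.
  have hn : ((i - k)%N.+1 < N)%N by rewrite /N; lia.
  rewrite (conv_PS r N _ _ _ (ltnW hn)).
  apply: etrans (agree_mul (PS_beta r N (- lam i) _ (ltnW hn))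
                  (PS_y r N _ (lam k) (r%:R - k%:R - 1) (ltnW hn))
                  _ (leqnn _)) _.
  have hrb : (r%:R - k%:R - 1 : rat) = r%:R * lam k by rewrite lamE; field.
  apply: etrans (final_ii r N _ _ _ _ hr0 hn (cE i k hki) hrb) _.
  rewrite eq_ik //.
  by case: (eqVneq i k) => [->|_]; rewrite ?mulr0n.
Qed.
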